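(* Let $V$ be a real vector space of finite even dimension $n$ with nondegenerate quadratic form $Q$, and let $\sigma$ be a real structure on $\mathbb{C}l(V)$. Then the $\sigma$-product $(a,b)_\sigma:=\tau_n(\sigma(a^T)b)$ is a nondegenerate hermitian form on $\mathbb{C}l(V)$; its associated quadratic form restricts to $Q_\sigma$ on $V$ (i.e. $(v,v)_\sigma=Q_\sigma(v)$ for $v\in V$) and to $Q$ on $V_\sigma$; it satisfies $(w_1\cdots w_k,w_1\cdots w_k)_\sigma=Q(w_1)\cdots Q(w_k)$ for all $w_1,\dots,w_k\in V_\sigma$; and if $(e_i)_{1\le i\le n}$ is a pseudo-orthonormal basis of $V_\sigma$ for $Q$, then $(e_I)_{I\subset\{1,\dots,n\}}$ is a pseudo-orthonormal basis of $\mathbb{C}l(V)$ for the $\sigma$-product.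
   Context: $Cl(V,Q)$ is the real Clifford algebra with $v^2=+Q(v)$, $\mathbb{C}l(V)$ its complexification, $V^{\mathbb{C}}\subset\mathbb{C}l(V)$, $B$ the bilinear form of $Q$ extended complex-bilinearly. $T$ is the linear antiautomorphism of $\mathbb{C}l(V)$ restricting to the identity on $V$, $a^T=T(a)$. A real structure is an involutive antilinear algebra automorphism of $\mathbb{C}l(V)$ stabilizing $V^{\mathbb{C}}$. $V_\sigma=\{v\in V^{\mathbb{C}}:\sigma(v)=v\}$ (on which $Q$ is real and nondegenerate); $Q_\sigma(v)=B(\sigma(v),v)$ for $v\in V$. For a basis $(e_i)$ and $I=\{i_1<\dots<i_k\}$, $e_I=e_{i_1}\cdots e_{i_k}$, $e_\emptyset=1$. The normalized trace $\tau_n:\mathbb{C}l(V)\to\mathbb{C}$ is the coordinate on $1$ in the basis $(e_I)$ associated with any pseudo-orthonormal basis of $V^{\mathbb{C}}$ (it is the unique linear form with $\tau_n(ab)=\tau_n(ba)$ and $\tau_n(1)=1$). A pseudo-orthonormal basis for a form is an orthogonal basis whose vectors have square $\pm1$. *)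

(* Defs.v *)
From HB Require Import structures.
From mathcomp Require Import all_boot all_order all_algebra all_field.
From mathcomp Require Import complex.
Set Implicit Arguments. Unset Strict Implicit. Unset Printing Implicit Defensive.
Import Order.TTheory GRing.Theory Num.Theory.
Local Open Scope ring_scope.

Definition cplx (R : rcfType) (x : R) : R[i] := (x%:C)%C.

(* V = R^n (row vectors), Q(v) = v G v^T with G symmetric invertible.
   V^C = R[i]^n, and B is the complex-bilinear extension of the polar form. *)
Definition cvec (R : rcfType) n (v : 'rV[R]_n) : 'rV[R[i]]_n := map_mx (@cplx R) v.
Definition Bform (R : rcfType) n (G : 'M[R]_n) (u v : 'rV[R[i]]_n) : R[i] :=
  (u *m map_mx (@cplx R) G *m v^T) 0 0.

(* e_I = e_{i_1} ... e_{i_k} for I = {i_1 < ... < i_k} (enum of a set of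
   ordinals is increasing). *)
Definition monom (R : rcfType) n (A : falgType R[i]) (iota : 'rV[R[i]]_n -> A)
  (e : 'I_n -> 'rV[R[i]]_n) (X : {set 'I_n}) : A :=
  \prod_(i <- enum X) iota (e i).

Definition monoms (R : rcfType) n (A : falgType R[i]) (iota : 'rV[R[i]]_n -> A)
  (e : 'I_n -> 'rV[R[i]]_n) : seq A :=
  [seq monom iota e X | X <- enum [set: {set 'I_n}]].

(* (A, iota) is the complex Clifford algebra Cl(V)^C = Cl(V^C, B):
   iota : V^C -> A complex linear, iota(v)^2 = B(v,v), A is generated (spanned)
   by the products of the images of a basis of V^C, and dim A = 2^n. *)
Definition is_complex_clifford (R : rcfType) n (G : 'M[R]_n)
  (A : falgType R[i]) (iota : 'rV[R[i]]_n -> A) : Prop :=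
  [/\ forall (a : R[i]) u v, iota (a *: u + v) = a *: iota u + iota v,
      forall v, iota v * iota v = (Bform G v v)%:A,
      span (monoms iota (fun i => delta_mx 0%R i)) = fullv
    & dimv (fullv : {vspace A}) = (2 ^ n)%N].

Definition is_real_structure (R : rcfType) n (A : falgType R[i])
  (iota : 'rV[R[i]]_n -> A) (sigma : A -> A) : Prop :=
  [/\ forall x y, sigma (x + y) = sigma x + sigma y,
      forall (c : R[i]) x, sigma (c *: x) = (Num.conj c) *: sigma x,
      forall x y, sigma (x * y) = sigma x * sigma y,
      sigma 1 = 1
    & (forall x, sigma (sigma x) = x) /\ forall v, exists w, sigma (iota v) = iota w].

(* T : the linear antiautomorphism which is the identity on V (hence on V^C). *)
Definition is_transposition (R : rcfType) n (A : falgType R[i])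
  (iota : 'rV[R[i]]_n -> A) (T : A -> A) : Prop :=
  [/\ forall (c : R[i]) x y, T (c *: x + y) = c *: T x + T y,
      forall x y, T (x * y) = T y * T x,
      T 1 = 1
    & forall v : 'rV[R]_n, T (iota (cvec v)) = iota (cvec v)].

Definition is_normalized_trace (R : rcfType) (A : falgType R[i]) (tau : A -> R[i]) :
  Prop :=
  [/\ forall (c : R[i]) x y, tau (c *: x + y) = c * tau x + tau y,
      forall x y, tau (x * y) = tau (y * x)
    & tau 1 = 1].

Definition sigma_prod (R : rcfType) (A : falgType R[i]) (sigma T : A -> A)
  (tau : A -> R[i]) (a b : A) : R[i] := tau (sigma (T a) * b).

Definition is_hermitian_form (R : rcfType) (A : falgType R[i]) (f : A -> A -> R[i]) : Prop :=
  [/\ forall (c : R[i]) a b1 b2, f a (c *: b1 + b2) = c * f a b1 + f a b2,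
      forall (c : R[i]) a1 a2 b, f (c *: a1 + a2) b = (Num.conj c) * f a1 b + f a2 b
    & forall a b, f b a = Num.conj (f a b)].

Definition nondegenerate_form (R : rcfType) (A : falgType R[i]) (f : A -> A -> R[i]) : Prop :=
  forall a, (forall b, f a b = 0) -> a = 0.

Definition in_Vsigma (R : rcfType) n (A : falgType R[i])
  (iota : 'rV[R[i]]_n -> A) (sigma : A -> A) (v : 'rV[R[i]]_n) : Prop :=
  sigma (iota v) = iota v.

Definition pseudo_orthonormal_basis_Vsigma (R : rcfType) n (G : 'M[R]_n)
  (A : falgType R[i]) (iota : 'rV[R[i]]_n -> A) (sigma : A -> A)
  (e : 'I_n -> 'rV[R[i]]_n) : Prop :=
  [/\ forall i, in_Vsigma iota sigma (e i),
      forall v, in_Vsigma iota sigma v ->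
        exists c : 'I_n -> R, v = \sum_i cplx (c i) *: e i,
      forall c : 'I_n -> R, \sum_i cplx (c i) *: e i = 0 -> forall i, c i = 0,
      forall i j, i != j -> Bform G (e i) (e j) = 0
    & forall i, Bform G (e i) (e i) = 1 \/ Bform G (e i) (e i) = -1].

Definition pseudo_orthonormal_basis_A (R : rcfType) n (A : falgType R[i])
  (f : A -> A -> R[i]) (b : {set 'I_n} -> A) : Prop :=
  [/\ basis_of fullv [seq b X | X <- enum [set: {set 'I_n}]],
      forall X1 X2, X1 != X2 -> f (b X1) (b X2) = 0
    & forall X, f (b X) (b X) = 1 \/ f (b X) (b X) = -1].

(* Main.v *)
Require Import Defs.
From HB Require Import structures.
From mathcomp Require Import all_boot all_order all_algebra all_field.
From mathcomp Require Import complex.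
From Stdlib Require Import Classical.
Import Order.TTheory GRing.Theory Num.Theory.
Local Open Scope ring_scope.

Set Implicit Arguments. Unset Strict Implicit. Unset Printing Implicit Defensive.


Section Orth.
Variables (F : numFieldType) (n : nat) (M : 'M[F]_n).
Hypothesis HM : M^T = M.
Hypothesis HU : M \in unitmx.

Let b (u v : 'rV[F]_n) := (u *m M *m v^T) 0 0.

Lemma b_sym u v : b u v = b v u.
Proof.
have key (N : 'M[F]_1) : N 0 0 = (N^T) 0 0 by rewrite mxE.
by rewrite /b key !trmx_mul trmxK HM mulmxA.
Qed.

Lemma bDl u v w : b (u + v) w = b u w + b v w.
Proof. by rewrite /b !mulmxDl mxE. Qed.
Lemma bZl a u w : b (a *: u) w = a * b u w.
Proof. by rewrite /b -!scalemxAl mxE. Qed.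
Lemma bNl u w : b (- u) w = - b u w.
Proof. by rewrite -scaleN1r bZl mulN1r. Qed.
Lemma bsuml k (f : 'I_k -> 'rV[F]_n) w : b (\sum_l f l) w = \sum_l b (f l) w.
Proof. by rewrite /b !mulmx_suml summxE. Qed.


Lemma orth_vec (s : seq 'rV[F]_n) k : size s = k -> (k < n)%N ->
  exists2 x, x != 0 & forall j, (j < k)%N -> b x s`_j = 0.
Proof.
move=> sz kn.
pose S : 'M[F]_(k, n) := \matrix_(j < k, l < n) (s`_j) 0 l.
pose N := M *m S^T.
have HN x (j : 'I_k) : (x *m N) 0 j = b x s`_j.
  rewrite /b /N mulmxA [LHS]mxE [RHS]mxE; apply: eq_bigr => l _; rewrite !mxE.
  done.
pose K := kermx N.
have rK : (0 < \rank K)%N.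
  rewrite /K mxrank_ker subn_gt0; apply: leq_ltn_trans kn; exact: rank_leq_col.
have [i [l Kil]] : exists i l, K i l != 0.
  apply: NNPP => H; move: rK; suff -> : K = 0 by rewrite mxrank0.
  apply/matrixP => i l; rewrite [RHS]mxE; apply/eqP; apply: NNPP => H'; apply: H.
  by exists i, l; apply/negP.
exists (row i K).
  by apply/eqP => /matrixP/(_ 0 l); rewrite [LHS]mxE [RHS]mxE => /eqP; rewrite (negbTE Kil).
move=> j jk; rewrite -(HN _ (Ordinal jk)).
have /eqP -> : row i K *m N == 0 by rewrite -sub_kermx row_sub.
by rewrite mxE.
Qed.

Lemma b_delta x l : b x (delta_mx 0 l) = (x *m M) 0 l.
Proof.
rewrite /b; set u := x *m M.
rewrite mxE (bigD1 l) //= big1 => [|m ml]; rewrite !mxE ?eqxx ?mulr1 ?addr0 //.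
by rewrite (negbTE ml) andbF mulr0.
Qed.

Lemma orth_step (s : seq 'rV[F]_n) k : size s = k -> (k < n)%N ->
  (forall i j, (i < k)%N -> (j < k)%N -> i != j -> b s`_i s`_j = 0) ->
  (forall i, (i < k)%N -> b s`_i s`_i != 0) ->
  exists w, (forall j, (j < k)%N -> b w s`_j = 0) /\ b w w != 0.
Proof.
move=> sz kn Ho Hn.
have [x x0 xo] := orth_vec sz kn.
have xM0 : x *m M != 0.
  apply: contra x0 => /eqP H; apply/eqP.
  by rewrite -(mulmxK HU x) H mul0mx.
have [l xl] : exists l, (x *m M) 0 l != 0.
  apply: NNPP => H; move: xM0; suff -> : x *m M = 0 by rewrite eqxx.
  apply/matrixP => i m; rewrite [RHS]mxE (ord1 i); apply/eqP; apply: NNPP => H'.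
  by apply: H; exists m; apply/negP.
pose y := delta_mx 0 l : 'rV[F]_n.
pose y' := y - \sum_(j < k) (b y s`_j / b s`_j s`_j) *: s`_j.
have y'o j : (j < k)%N -> b y' s`_j = 0.
  move=> jk; rewrite /y' bDl bNl bsuml (bigD1 (Ordinal jk)) //=.
  rewrite big1 => [|m mj]; last first.
    rewrite bZl (Ho m j) ?mulr0 //.
  by rewrite addr0 bZl mulfVK ?Hn // subrr.
have xy' : b x y' != 0.
  rewrite b_sym /y' bDl bNl bsuml big1 => [|m _]; last first.
    by rewrite bZl (b_sym s`_m x) xo ?mulr0.
  by rewrite oppr0 addr0 b_sym /y b_delta.
clearbody y'.
case: (boolP (b x x == 0)) => [/eqP bxx|bxx]; last by exists x.
case: (boolP (b y' y' == 0)) => [/eqP byy|byy]; last by exists y'.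
exists (x + y'); split.
  by move=> j jk; rewrite bDl xo // y'o // addr0.
rewrite bDl (b_sym x) (b_sym y') !bDl bxx byy (b_sym y' x) add0r addr0 -mulr2n.
rewrite mulrn_eq0 (negbTE xy') orbF; exact: isT.
Qed.

Lemma orth_seq k : (k <= n)%N -> exists s : seq 'rV[F]_n, [/\ size s = k,
  (forall i j, (i < k)%N -> (j < k)%N -> i != j -> b s`_i s`_j = 0) &
  (forall i, (i < k)%N -> b s`_i s`_i != 0)].
Proof.
elim: k => [_|k IH kn]; first by exists [::]; split.
have [s [sz Ho Hn]] := IH (ltnW kn).
have [w [wo wn]] := orth_step sz kn Ho Hn.
exists (rcons s w); split; first by rewrite size_rcons sz.
  move=> i j; rewrite ltnS leq_eqVlt => /orP[/eqP ->|ik];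
    rewrite ltnS leq_eqVlt => /orP[/eqP ->|jk].
  - by rewrite eqxx.
  - move=> _; rewrite !nth_rcons sz ltnn eqxx jk; exact: wo.
  - move=> _; rewrite !nth_rcons sz ltnn eqxx ik b_sym; exact: wo.
  - move=> ij; rewrite !nth_rcons sz ik jk; exact: Ho.
move=> i; rewrite ltnS leq_eqVlt => /orP[/eqP ->|ik].
  by rewrite !nth_rcons sz ltnn eqxx.
rewrite !nth_rcons sz ik; exact: Hn.
Qed.

Lemma orth_exists : exists e : 'I_n -> 'rV[F]_n,
  (forall i j, i != j -> (e i *m M *m (e j)^T) 0 0 = 0) /\
  (forall i, (e i *m M *m (e i)^T) 0 0 != 0).
Proof.
have [s [sz Ho Hn]] := orth_seq (leqnn n).
exists (fun i => s`_i); split; last by move=> i; exact: Hn.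
by move=> i j ij; apply: Ho.
Qed.

End Orth.


Section Lin.
Variables (K : fieldType) (V : vectType K).

Definition islin (f : V -> K) := forall (c : K) x y, f (c *: x + y) = c * f x + f y.

Lemma islin0 f : islin f -> f 0 = 0.
Proof.
move=> h; have := h 1 0 0; rewrite scale1r addr0 mul1r => e.
by apply: (addrI (f 0)); rewrite addr0 -e.
Qed.

Lemma islinZ f : islin f -> forall c x, f (c *: x) = c * f x.
Proof. by move=> h c x; rewrite -[c *: x]addr0 h islin0 // addr0. Qed.

Lemma islin_sum f : islin f -> forall N (k : 'I_N -> K) (v : 'I_N -> V),
  f (\sum_i k i *: v i) = \sum_i k i * f (v i).
Proof.
move=> h N k v; apply: (big_rec2 (fun a b => f b = a)); first exact: islin0.
by move=> i a b _ <-; rewrite h.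
Qed.

Lemma gen_ind N (s : 'I_N -> V) (phi : 'I_N -> V -> K) :
  (forall i, islin (phi i)) ->
  (forall i j, i != j -> phi i (s j) = 0) -> (forall i, phi i (s i) != 0) ->
  forall k : 'I_N -> K, (forall i, phi i (\sum_j k j *: s j) = 0) ->
  forall i, k i = 0.
Proof.
move=> hl ho hn k hk i; have := hk i; rewrite islin_sum //.
rewrite (bigD1 i) //= big1 => [|j ji]; last by rewrite ho ?mulr0 // eq_sym.
by rewrite addr0 => /eqP; rewrite mulf_eq0 (negbTE (hn i)) orbF => /eqP.
Qed.

Variable (n : nat).
Let E := enum [set: {set 'I_n}].

Lemma size_E : size E = (2 ^ n)%N.
Proof. by rewrite /E -cardE -powersetT card_powerset cardsT card_ord. Qed.

Lemma fam_ind (f : {set 'I_n} -> V) (phi : {set 'I_n} -> V -> K) :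
  (forall X, islin (phi X)) ->
  (forall X Y, X != Y -> phi X (f Y) = 0) -> (forall X, phi X (f X) != 0) ->
  forall x, x \in <<[seq f X | X <- E]>>%VS -> (forall X, phi X x = 0) -> x = 0.
Proof.
move=> hl ho hn x xs hx.
set s := [seq f X | X <- E] in xs.
have := coord_span (X := in_tuple s) xs => ex.
have sz : size s = size E by rewrite size_map.
pose XX (i : 'I_(size s)) := nth set0 E i.
have sE (i : 'I_(size s)) : (in_tuple s)`_i = f (XX i).
  by rewrite /= (nth_map set0) // -sz.
have h0 := @gen_ind (size s) (fun i => (in_tuple s)`_i) (fun i => phi (XX i))
  (fun i => hl _).
have hk : forall i, coord (in_tuple s) i x = 0.
  apply: h0.
  - move=> i j ij; rewrite sE ho //; rewrite /XX nth_uniq ?enum_uniq //.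
    exact: (leq_trans (ltn_ord i) (eq_leq sz)). exact: (leq_trans (ltn_ord j) (eq_leq sz)).
  - by move=> i; rewrite sE hn.
  - by move=> i; rewrite -ex hx.
by rewrite ex big1 // => i _; rewrite hk scale0r.
Qed.

Lemma fam_free (f : {set 'I_n} -> V) (phi : {set 'I_n} -> V -> K) :
  (forall X, islin (phi X)) ->
  (forall X Y, X != Y -> phi X (f Y) = 0) -> (forall X, phi X (f X) != 0) ->
  free [seq f X | X <- E].
Proof.
move=> hl ho hn; set s := [seq f X | X <- E].
apply/(@freeP _ _ _ (in_tuple s)) => k hk.
have sz : size s = size E by rewrite size_map.
pose XX (i : 'I_(size s)) := nth set0 E i.
have sE (i : 'I_(size s)) : (in_tuple s)`_i = f (XX i).
  by rewrite /= (nth_map set0) // -sz.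
apply: (@gen_ind (size s) (fun i => (in_tuple s)`_i) (fun i => phi (XX i))).
- by move=> i; apply: hl.
- move=> i j ij; rewrite sE ho //; rewrite /XX nth_uniq ?enum_uniq //.
  exact: (leq_trans (ltn_ord i) (eq_leq sz)). exact: (leq_trans (ltn_ord j) (eq_leq sz)).
- by move=> i; rewrite sE hn.
- by move=> i; rewrite hk islin0.
Qed.

Lemma fam_basis (f : {set 'I_n} -> V) (phi : {set 'I_n} -> V -> K) :
  \dim (fullv : {vspace V}) = (2 ^ n)%N ->
  (forall X, islin (phi X)) ->
  (forall X Y, X != Y -> phi X (f Y) = 0) -> (forall X, phi X (f X) != 0) ->
  basis_of fullv [seq f X | X <- E].
Proof.
move=> hd hl ho hn; have fr := fam_free hl ho hn.
rewrite basisEfree fr subvf /= size_map size_E hd leqnn.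
done.
Qed.


Lemma fam_agree (f : {set 'I_n} -> V) (t1 t2 : V -> K) :
  islin t1 -> islin t2 -> <<[seq f X | X <- E]>>%VS = fullv ->
  (forall X, t1 (f X) = t2 (f X)) -> forall x, t1 x = t2 x.
Proof.
move=> l1 l2 hs h x; set s := [seq f X | X <- E] in hs.
have xs : x \in <<in_tuple s>>%VS by rewrite hs memvf.
have sz : size s = size E by rewrite size_map.
rewrite (coord_span xs) !islin_sum //; apply: eq_bigr => i _.
by rewrite /= (nth_map set0) -?sz // h.
Qed.

End Lin.


Section Cliff.
Variables (R : rcfType) (n : nat) (G : 'M[R]_n) (A : falgType R[i])
  (iota : 'rV[R[i]]_n -> A).
Hypothesis HG : G^T = G.
Hypothesis Hlin : forall (a : R[i]) u v, iota (a *: u + v) = a *: iota u + iota v.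
Hypothesis Hsq : forall v, iota v * iota v = (Bform G v v)%:A.

Local Notation B := (Bform G).

Lemma HGc : (map_mx (@cplx R) G)^T = map_mx (@cplx R) G.
Proof. by rewrite map_trmx HG. Qed.

Lemma Bsym u v : B u v = B v u.
Proof. exact: b_sym HGc u v. Qed.
Lemma BDl u v w : B (u + v) w = B u w + B v w.
Proof. exact: bDl. Qed.

Lemma iota0 : iota 0 = 0.
Proof.
have := Hlin 1 0 0; rewrite scale1r addr0 scale1r => e.
by apply: (addrI (iota 0)); rewrite addr0 -e.
Qed.

Lemma iotaD u v : iota (u + v) = iota u + iota v.
Proof. by have := Hlin 1 u v; rewrite !scale1r. Qed.

Lemma iotaZ a u : iota (a *: u) = a *: iota u.
Proof. by have := Hlin a u 0; rewrite addr0 iota0 addr0. Qed.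

Lemma anticomm u v :
  iota u * iota v + iota v * iota u = (B u v *+ 2)%:A.
Proof.
have e1 : (iota u + iota v) * (iota u + iota v) =
  iota u * iota u + (iota u * iota v + iota v * iota u) + iota v * iota v.
  by rewrite mulrDl !mulrDr !addrA.
rewrite -iotaD !Hsq in e1.
apply: (addrI (B u u)%:A); apply: (addIr (B v v)%:A).
rewrite -e1 -!scalerDl; congr (_ *: 1).
by rewrite !BDl (Bsym u (u + v)) (Bsym v (u + v)) !BDl (Bsym v u) mulr2n !addrA.
Qed.

Lemma Tiota (T : A -> A) :
  (forall c x y, T (c *: x + y) = c *: T x + T y) ->
  (forall v : 'rV[R]_n, T (iota (cvec v)) = iota (cvec v)) ->
  forall v, T (iota v) = iota v.
Proof.
move=> Tl Tv v.
have -> : v = 'i%C *: cvec (map_mx (@complex.Im R) v) + cvec (map_mx (@complex.Re R) v).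
  apply/matrixP=> i j; rewrite !mxE /cplx.
  by rewrite addrC {1}[v i j]complexE.
by rewrite Hlin Tl !Tv.
Qed.

Lemma collapse (ws : seq 'rV[R[i]]_n) :
  \prod_(w <- rev ws) iota w * \prod_(w <- ws) iota w = (\prod_(w <- ws) B w w)%:A.
Proof.
elim: ws => [|w ws IH]; first by rewrite !big_nil mul1r scale1r.
rewrite rev_cons -cats1 big_cat /= !big_cons big_nil mulr1.
rewrite -mulrA [iota w * (iota w * _)]mulrA Hsq mulr_algl -scalerAr IH.
by rewrite scalerA mulrC.
Qed.


Section Fam.
Variable e : 'I_n -> 'rV[R[i]]_n.
Hypothesis Ho : forall i j, i != j -> B (e i) (e j) = 0.
Hypothesis Hn : forall i, B (e i) (e i) != 0.

Definition Pm (s : seq 'I_n) := \prod_(i <- s) iota (e i).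

Lemma EE i j : i != j -> iota (e i) * iota (e j) = - (iota (e j) * iota (e i)).
Proof.
move=> ij; have := anticomm (e i) (e j); rewrite Ho // mul0rn scale0r.
by move/eqP; rewrite addr_eq0 => /eqP.
Qed.

Lemma EP i s : iota (e i) * Pm s =
  (-1) ^+ count (predC (pred1 i)) s *: (Pm s * iota (e i)).
Proof.
elim: s => [|j s IH]; first by rewrite /Pm big_nil mul1r mulr1 expr0 scale1r.
rewrite /Pm big_cons /= -/(Pm s).
case: (eqVneq j i) => [->|ji] /=.
  by rewrite {1}IH -scalerAr mulrA.
rewrite ?ji add1n exprS mulrA (EE (i:=i) (j:=j)); last by rewrite eq_sym.
by rewrite mulN1r mulNr -[iota (e j) * iota (e i) * Pm s]mulrA IH -scalerAr mulrA scaleNr.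
Qed.

Lemma Pm_cat s1 s2 : Pm (s1 ++ s2) = Pm s1 * Pm s2.
Proof. exact: big_cat. Qed.

Lemma Pm_map s : Pm s = \prod_(w <- map e s) iota w.
Proof. by rewrite big_map. Qed.

Lemma Pm_rev s : Pm (rev s) * Pm s = (\prod_(i <- s) B (e i) (e i))%:A.
Proof. by rewrite !Pm_map map_rev collapse big_map. Qed.

Lemma prodB_neq0 s : \prod_(i <- s) B (e i) (e i) != 0.
Proof. by rewrite prodf_seq_neq0; apply/allP => i _; rewrite Hn. Qed.

Variable t : A -> R[i].
Hypothesis tl : islin t.
Hypothesis tc : forall x y, t (x * y) = t (y * x).

Lemma tr_odd i s : odd (count (predC (pred1 i)) s) -> t (Pm s) = 0.
Proof.
move=> hodd.
have h1 : t (iota (e i) * Pm s * iota (e i)) = B (e i) (e i) * t (Pm s).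
  by rewrite -mulrA tc -mulrA Hsq mulr_algr (islinZ tl).
have h2 : t (iota (e i) * Pm s * iota (e i)) = - (B (e i) (e i) * t (Pm s)).
  rewrite EP -scalerAl (islinZ tl) -signr_odd hodd expr1 mulN1r.
  by rewrite -mulrA Hsq mulr_algr (islinZ tl).
move: h2; rewrite h1 => /eqP; rewrite -addr_eq0 -mulr2n mulrn_eq0 /=.
by rewrite mulf_eq0 (negbTE (Hn i)) /= => /eqP.
Qed.

Lemma tr_diff s1 s2 : ~~ odd n -> uniq s1 -> uniq s2 ->
  (exists i, (i \in s1) != (i \in s2)) -> t (Pm s1 * Pm s2) = 0.
Proof.
move=> hn u1 u2 [i0 hi0]; rewrite -Pm_cat.
have cnt i : (count (predC (pred1 i)) (s1 ++ s2) + ((i \in s1) + (i \in s2))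
    = size s1 + size s2)%N.
  rewrite -(count_uniq_mem i u1) -(count_uniq_mem i u2) count_cat.
  rewrite -(count_predC (pred1 i) s1) -(count_predC (pred1 i) s2).
  by rewrite addnC addnACA.
case: (boolP (odd (size s1 + size s2))) => hs.
  have [i hi] : exists i, (i \in s1) = (i \in s2).
    apply: NNPP => H.
    have hU : [set x | x \in s1] :|: [set x | x \in s2] = setT.
      apply/setP => x; rewrite !inE.
      case: (boolP (x \in s1)) => //= h1; case: (boolP (x \in s2)) => //= h2.
      by exfalso; apply: H; exists x; rewrite (negbTE h1) (negbTE h2).
    have hI : [set x | x \in s1] :&: [set x | x \in s2] = set0.
      apply/setP => x; rewrite !inE.
      case: (boolP (x \in s1)) => //= h1; case: (boolP (x \in s2)) => //= h2.
      by exfalso; apply: H; exists x; rewrite h1 h2.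
    have := cardsUI [set x | x \in s1] [set x | x \in s2].
    rewrite hU hI cards0 cardsT card_ord addn0 !cardsE.
    rewrite (card_uniqP u1) (card_uniqP u2) => ee.
    by rewrite -ee in hs; rewrite hs in hn.
  apply: (tr_odd (i:=i)); have := cnt i; rewrite hi addnn => /(congr1 odd).
  by rewrite oddD odd_double addbF hs.
apply: (tr_odd (i:=i0)); have := cnt i0; move/(congr1 odd).
have h1 : odd ((i0 \in s1) + (i0 \in s2)).
  by move: hi0; case: (i0 \in s1); case: (i0 \in s2).
by rewrite oddD h1 (negbTE hs) addbT => /negbFE.
Qed.

Hypothesis t1 : t 1 = 1.

Lemma set_diff (X Y : {set 'I_n}) : X != Y -> exists i, (i \in X) != (i \in Y).
Proof.
move=> XY; apply: NNPP => H; move/eqP: XY; apply; apply/setP => i.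
by apply/eqP; apply: NNPP => H'; apply: H; exists i; apply/negP.
Qed.

Lemma pair_ortho (X Y : {set 'I_n}) : ~~ odd n -> X != Y ->
  t (Pm (rev (enum X)) * Pm (enum Y)) = 0.
Proof.
move=> hn XY; apply: tr_diff; rewrite ?rev_uniq ?enum_uniq //.
have [i hi] := set_diff XY; exists i.
by rewrite mem_rev !mem_enum.
Qed.

Lemma pair_diag (X : {set 'I_n}) : t (Pm (rev (enum X)) * Pm (enum X)) != 0.
Proof.
rewrite Pm_rev (islinZ tl) t1 mulr1; exact: prodB_neq0.
Qed.

Hypothesis hdim : \dim (fullv : {vspace A}) = (2 ^ n)%N.

Lemma fam_is_basis : ~~ odd n ->
  basis_of fullv [seq Pm (enum X) | X : {set 'I_n} <- enum [set: {set 'I_n}]].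
Proof.
move=> hn.
apply: (@fam_basis _ _ _ _ (fun (X : {set 'I_n}) x => t (Pm (rev (enum X)) * x))) => //.
- move=> X c x y; rewrite mulrDr -scalerAr; exact: tl.
- by move=> X Y XY; apply: pair_ortho.
- by move=> X; apply: pair_diag.
Qed.

Lemma trace_nondeg : ~~ odd n -> forall x, (forall y, t (x * y) = 0) -> x = 0.
Proof.
move=> hn x hx.
apply: (@fam_ind _ _ _ (fun X : {set 'I_n} => Pm (enum X)) (fun (X : {set 'I_n}) x => t (x * Pm (rev (enum X))))).
- move=> X c u v; rewrite mulrDl -scalerAl; exact: tl.
- by move=> X Y XY /=; rewrite tc; apply: pair_ortho.
- by move=> X /=; rewrite tc; apply: pair_diag.
- by have /andP[/eqP -> _] := fam_is_basis hn; rewrite memvf.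
- by move=> X; apply: hx.
Qed.

End Fam.

Lemma trace_unique (e : 'I_n -> 'rV[R[i]]_n) (t t' : A -> R[i]) :
  ~~ odd n -> \dim (fullv : {vspace A}) = (2 ^ n)%N ->
  (forall i j, i != j -> B (e i) (e j) = 0) -> (forall i, B (e i) (e i) != 0) ->
  islin t -> (forall x y, t (x * y) = t (y * x)) -> t 1 = 1 ->
  islin t' -> (forall x y, t' (x * y) = t' (y * x)) -> t' 1 = 1 ->
  forall x, t x = t' x.
Proof.
move=> hn hd Ho Hn tl tc t1 tl' tc' t1'.
have /andP[/eqP hs _] := fam_is_basis Ho Hn tl tc t1 hd hn.
apply: (fam_agree tl tl' hs) => X.
case: (eqVneq X set0) => [->|X0].
  by rewrite enum_set0 /Pm big_nil t1 t1'.
have [i hi] := set_diff X0.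
have z (u : A -> R[i]) : islin u -> (forall x y, u (x * y) = u (y * x)) ->
    u (Pm e (enum X)) = 0.
  move=> ul uc; rewrite -[Pm e (enum X)]mulr1.
  have -> : (1 : A) = Pm e [::] by rewrite /Pm big_nil.
  apply: (tr_diff Ho Hn ul uc) => //; first exact: enum_uniq.
  by exists i; rewrite mem_enum in_nil; move: hi; rewrite in_set0.
by rewrite (z _ tl tc) (z _ tl' tc').
Qed.

End Cliff.


Lemma gen_id (R : rcfType) n (A : falgType R[i]) (iota : 'rV[R[i]]_n -> A)
  (f : A -> A) :
  span (monoms iota (fun i => delta_mx 0%R i)) = fullv ->
  (forall (c : R[i]) x y, f (c *: x + y) = c *: f x + f y) ->
  (forall x y, f (x * y) = f x * f y) -> f 1 = 1 ->
  (forall i, f (iota (delta_mx 0 i)) = iota (delta_mx 0 i)) ->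
  forall x, f x = x.
Proof.
move=> hs fl fM f1 fd x.
set s := monoms _ _ in hs.
have xs : x \in <<in_tuple s>>%VS by rewrite hs memvf.
have f0 : f 0 = 0.
  have := fl 1 0 0; rewrite scale1r addr0 scale1r => e.
  by apply: (addrI (f 0)); rewrite addr0 -e.
have fsum N (k : 'I_N -> R[i]) (v : 'I_N -> A) :
    f (\sum_i k i *: v i) = \sum_i k i *: f (v i).
  apply: (big_rec2 (fun a b => f b = a)); first exact: f0.
  by move=> i a b _ <-; rewrite fl.
rewrite {1}(coord_span xs) fsum {2}(coord_span xs); apply: eq_bigr => i _.
congr (_ *: _).
have sz : size s = size (enum [set: {set 'I_n}]) by rewrite size_map.
rewrite /= (nth_map set0) -?sz // /monom.
elim: (enum _) => [|j r IH]; first by rewrite !big_nil f1.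
by rewrite !big_cons fM IH fd.
Qed.

Unset Implicit Arguments. Set Strict Implicit.

Theorem proposition3 (R : rcfType) (n : nat) (G : 'M[R]_n)
  (A : falgType R[i]) (iota : 'rV[R[i]]_n -> A)
  (sigma T : A -> A) (tau : A -> R[i]) :
  ~~ odd n ->
  G^T = G -> G \in unitmx ->
  is_complex_clifford G iota ->
  is_real_structure iota sigma ->
  is_transposition iota T ->
  is_normalized_trace tau ->
  let sp := sigma_prod sigma T tau in
  [/\ is_hermitian_form sp,
      nondegenerate_form sp,
      (* restricts to Q_sigma on V *)
      forall (v : 'rV[R]_n) (w : 'rV[R[i]]_n),
        sigma (iota (cvec v)) = iota w ->
        sp (iota (cvec v)) (iota (cvec v)) = Bform G w (cvec v),
      (* restricts to Q on V_sigma *)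
      (forall v : 'rV[R[i]]_n, in_Vsigma iota sigma v ->
        sp (iota v) (iota v) = Bform G v v) /\
      (* products of vectors of V_sigma *)
      forall ws : seq 'rV[R[i]]_n, (forall w, w \in ws -> in_Vsigma iota sigma w) ->
        sp (\prod_(w <- ws) iota w) (\prod_(w <- ws) iota w)
        = \prod_(w <- ws) Bform G w w
    & (* pseudo-orthonormal bases *)
      forall e : 'I_n -> 'rV[R[i]]_n,
        pseudo_orthonormal_basis_Vsigma G iota sigma e ->
        pseudo_orthonormal_basis_A sp (monom iota e)].
Proof.
move=> hn HG HU [Hlin Hsq Hspan Hdim] [sA sZ sM s1 [sK sV]] [Tl TM T1 Tv]
  [tl tc t1] sp.
have tL : islin tau by exact: tl.
have HGc : (map_mx (@cplx R) G)^T = map_mx (@cplx R) G by rewrite map_trmx HG.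
have HGu : map_mx (@cplx R) G \in unitmx.
  by rewrite (map_unitmx (real_complex R)).
have [e0 [Ho0 Hn0]] := orth_exists HGc HGu.
have T0 : T 0 = 0.
  have := Tl 1 0 0; rewrite scale1r addr0 scale1r => e.
  by apply: (addrI (T 0)); rewrite addr0 -e.
have s0 : sigma 0 = 0.
  have := sA 0 0; rewrite addr0 => e.
  by apply: (addrI (sigma 0)); rewrite addr0 -e.
have TI : forall v, T (iota v) = iota v.
  move=> v; apply: (Tiota Hlin); [exact: Tl | exact: Tv].

have TT : forall x, T (T x) = x.
  apply: (gen_id Hspan).
  - by move=> c x y; rewrite !Tl.
  - by move=> x y; rewrite !TM.
  - by rewrite !T1.
  - by move=> i; rewrite !TI.
have STST : forall x, sigma (T (sigma (T x))) = x.
  apply: (gen_id Hspan).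
  - by move=> c x y; rewrite Tl sA sZ Tl sA sZ conjCK.
  - by move=> x y; rewrite TM sM TM sM.
  - by rewrite T1 s1 T1 s1.
  - move=> i; have [w hw] := sV (delta_mx 0 i).
    by rewrite TI hw TI -hw sK.
have STS : forall x, sigma (T (sigma x)) = T x.
  by move=> x; have := STST (T x); rewrite TT.
have TS : forall x, T (sigma x) = sigma (T x).
  by move=> x; rewrite -[T (sigma x)]sK STS.
have Ho : forall i j, i != j -> Bform G (e0 i) (e0 j) = 0 by exact: Ho0.
have Hn : forall i, Bform G (e0 i) (e0 i) != 0 by exact: Hn0.
have tauT : forall x, tau (T x) = tau x.
  move=> x; symmetry.
  apply: (trace_unique HG Hlin Hsq (e:=e0) (t:=tau) (t':=fun x => tau (T x)))
    => //.
  - by move=> c y z /=; rewrite Tl; exact: tl.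
  - by move=> y z /=; rewrite !TM tc.
  - by rewrite /= T1.
have tauS : forall x, tau (sigma x) = Num.conj (tau x).
  move=> x.
  rewrite (trace_unique HG Hlin Hsq (e:=e0) (t:=tau)
     (t':=fun x => Num.conj (tau (sigma x))) hn Hdim Ho Hn tL tc t1) ?sK //.
  - by move=> c y z /=; rewrite sA sZ tl rmorphD rmorphM /= conjCK.
  - by move=> y z /=; rewrite !sM tc.
  - by rewrite /= s1 t1 rmorph1.
have tscal : forall c, tau (c%:A) = c.
  by move=> c; rewrite (islinZ tL) t1 mulr1.
have tpair : forall u v, tau (iota u * iota v) = Bform G u v.
  move=> u v; have := anticomm HG Hlin Hsq u v.
  have tD : forall x y, tau (x + y) = tau x + tau y.
    by move=> x y; rewrite -[x]scale1r tl mul1r scale1r.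
  move/(congr1 tau); rewrite tscal tD [tau (iota v * _)]tc -mulr2n => /eqP.
  rewrite -subr_eq0 -mulrnBl mulrn_eq0 /= subr_eq0 => /eqP; done.
have Tprod : forall ws, T (\prod_(w <- ws) iota w) = \prod_(w <- rev ws) iota w.
  elim=> [|w ws IH]; first by rewrite !big_nil T1.
  by rewrite big_cons TM IH TI rev_cons -cats1 big_cat /= big_seq1.
have Sprod : forall ws, (forall w, w \in ws -> sigma (iota w) = iota w) ->
    sigma (\prod_(w <- ws) iota w) = \prod_(w <- ws) iota w.
  elim=> [|w ws IH] hw; first by rewrite !big_nil s1.
  rewrite !big_cons sM hw ?mem_head // IH // => x xs.
  by apply: hw; rewrite in_cons xs orbT.
split.
- split.
  + move=> c a b1 b2; rewrite /sp /sigma_prod mulrDr -scalerAr; exact: tl.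
  + move=> c a1 a2 b; rewrite /sp /sigma_prod Tl sA sZ mulrDl -scalerAl.
    exact: tl.
  + move=> a b; rewrite /sp /sigma_prod -tauS sM sK -tauT TM TS TT.
    done.
- move=> a ha.
  have h0 : sigma (T a) = 0.
    apply: (trace_nondeg HG Hlin Hsq Ho Hn tL tc t1 Hdim hn) => y; exact: ha.
  by rewrite -[a]TT -[T a]sK h0 s0 T0.
- move=> v w hw; rewrite /sp /sigma_prod TI hw; exact: tpair.
- split.
  + move=> v hv; rewrite /sp /sigma_prod TI hv; exact: tpair.
  + move=> ws hws; rewrite /sp /sigma_prod Tprod Sprod; last first.
      by move=> w; rewrite mem_rev; apply: hws.
    by rewrite (collapse Hsq) tscal.
- move=> e [He_in He_span He_ind Heo Hen].
  have Hn' : forall i, Bform G (e i) (e i) != 0.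
    by move=> i; case: (Hen i) => ->; rewrite ?oner_eq0 ?oppr_eq0 ?oner_eq0.
  have Tm : forall s, sigma (T (Pm iota e s)) = Pm iota e (rev s).
    move=> s; rewrite !Pm_map Tprod Sprod -?map_rev //.
    move=> w /mapP [i _ ->]; exact: He_in.
  split.
  + exact: (fam_is_basis HG Hlin Hsq Heo Hn' tL tc t1 Hdim hn).
  + move=> X1 X2 X12; rewrite /sp /sigma_prod.
    have -> : monom iota e X1 = Pm iota e (enum X1) by [].
    have -> : monom iota e X2 = Pm iota e (enum X2) by [].
    by rewrite Tm; apply: (pair_ortho HG Hlin Hsq Heo Hn' tL tc hn X12).
  + move=> X; rewrite /sp /sigma_prod.
    have -> : monom iota e X = Pm iota e (enum X) by [].
    rewrite Tm (Pm_rev Hsq) tscal.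
    elim: (enum X) => [|i r IH]; first by rewrite big_nil; left.
    rewrite big_cons; case: IH => ->; case: (Hen i) => ->;
      rewrite ?mulr1 ?mulrN1 ?opprK; by [left | right].
Qed.
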